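(* Let $R$ be a ring with identity and $(S,\leq)$ a strictly ordered monoid which is quasitotally ordered, and suppose $R$ is $S$-Armendariz. Let $A=R[[S]]$ be the ring of generalized power series. Then $A$ is a generalized right Baer ring if and only if $R$ is a generalized right Baer ring; and $A$ is a generalized right quasi-Baer ring if and only if $R$ is a generalized right quasi-Baer ring.
   Context: All rings are associative with identity. For a nonempty subset $X$ of a ring $R$, $r_R(X)=\{a\in R : xa=0 \text{ for all } x\in X\}$, and for a positive integer $n$, $X^n$ denotes the set of all products $a_1\cdots a_n$ with $a_i\in X$. A ring $R$ is generalized right Baer if for every nonempty subset $X$ of $R$ there exist a positive integer $n$ and an idempotent $e\in R$ with $r_R(X^n)=eR$; it is generalized right quasi-Baer if for every right ideal $I$ of $R$ there exist a positive integer $n$ and an idempotent $e\in R$ with $r_R(I^n)=eR$. An ordered monoid $(S,\leq)$ is a monoid with a partial order such that $u\le v$ implies $ut\le vt$ and $tu\le tv$; it is strictly ordered if $u<v$ implies $ut<vt$ and $tu<tv$ for all $t\in S$; it is quasitotally ordered if $\leq$ can be refined to an order $\preceq$ making $S$ a strictly totally ordered monoid. A subset of $S$ is artinian if every strictly decreasing sequence in it is finite, and narrow if every set of pairwise incomparable elements in it is finite. The ring of generalized power series $R[[S]]$ is the set of maps $f:S\to R$ with artinian and narrow support $\{s: f(s)\ne0\}$, with pointwise addition and multiplication $(fg)(s)=\sum_{uv=s} f(u)g(v)$ (the sum is finite over pairs with $f(u)\neq0\neq g(v)$). $R$ is $S$-Armendariz if whenever $f,g\in R[[S]]$ satisfy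 $fg=0$, then $f(u)g(v)=0$ for all $u,v\in S$. *)

(* Defs.v *)
From HB Require Import structures.
From mathcomp Require Import all_boot all_order all_algebra.
From mathcomp Require Import boolp classical_sets functions cardinality fsbigop.
Set Implicit Arguments. Unset Strict Implicit. Unset Printing Implicit Defensive.
Import Order.TTheory GRing.Theory.
Local Open Scope classical_set_scope.
Local Open Scope ring_scope.

Definition is_monoid {S : Type} (mul : S -> S -> S) (one : S) : Prop :=
  [/\ forall x y z, mul x (mul y z) = mul (mul x y) z,
      forall x, mul one x = x & forall x, mul x one = x].

Definition is_partial_order {S : Type} (le : S -> S -> Prop) : Prop :=
  [/\ forall x, le x x,
      forall x y, le x y -> le y x -> x = y &
      forall x y z, le x y -> le y z -> le x z].

Definition strict_of {S : Type} (le : S -> S -> Prop) (x y : S) : Prop :=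
  le x y /\ x <> y.

Definition ordered_monoid {S : Type} (mul : S -> S -> S) (one : S)
  (le : S -> S -> Prop) : Prop :=
  [/\ is_monoid mul one, is_partial_order le &
      forall u v t, le u v -> le (mul u t) (mul v t) /\ le (mul t u) (mul t v)].

Definition strictly_ordered_monoid {S : Type} (mul : S -> S -> S) (one : S)
  (le : S -> S -> Prop) : Prop :=
  ordered_monoid mul one le /\
  forall u v t, strict_of le u v ->
    strict_of le (mul u t) (mul v t) /\ strict_of le (mul t u) (mul t v).

Definition quasitotally_ordered {S : Type} (mul : S -> S -> S) (one : S)
  (le : S -> S -> Prop) : Prop :=
  exists le' : S -> S -> Prop,
    (forall x y, le x y -> le' x y) /\
    strictly_ordered_monoid mul one le' /\
    (forall x y, le' x y \/ le' y x).

Definition artinian_set {S : Type} (le : S -> S -> Prop) (X : set S) : Prop :=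
  ~ exists a : nat -> S, forall n, X (a n) /\ strict_of le (a n.+1) (a n).

Definition narrow_set {S : Type} (le : S -> S -> Prop) (X : set S) : Prop :=
  forall Y : set S, Y `<=` X ->
    (forall x y, Y x -> Y y -> x <> y -> ~ le x y /\ ~ le y x) ->
    finite_set Y.

Definition supp {S : Type} {R : pzRingType} (f : S -> R) : set S :=
  [set s | f s != 0].

(* carrier of R[[S]] *)
Definition gps {S : Type} (le : S -> S -> Prop) {R : pzRingType} : set (S -> R) :=
  [set f | artinian_set le (supp f) /\ narrow_set le (supp f)].

Definition gps_add {S : Type} {R : pzRingType} (f g : S -> R) : S -> R :=
  fun s => f s + g s.
Definition gps_opp {S : Type} {R : pzRingType} (f : S -> R) : S -> R :=
  fun s => - f s.
Definition gps_zero {S : Type} {R : pzRingType} : S -> R := fun _ => 0.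

(* (fg)(s) = sum_{uv = s} f(u) g(v); the sum has finitely many nonzero terms
   for f, g in R[[S]], and \sum_(p \in A) is the sum over the (finite) support *)
Definition gps_mul {S : choiceType} (mul : S -> S -> S) {R : pzRingType}
  (f g : S -> R) : S -> R :=
  fun s => \sum_(p \in [set p : S * S | mul p.1 p.2 = s]) (f p.1 * g p.2).

(* ---------- Generalized (quasi-)Baer, for a ring given by its carrier
   P : set T and operations (used both for R and for R[[S]]) ---------- *)
Section GenRing.
Variables (T : Type) (P : set T) (add mul : T -> T -> T) (opp : T -> T) (zero : T).

Definition r_ann (X : set T) : set T :=
  [set a | P a /\ forall x, X x -> mul x a = zero].

Fixpoint set_pow (X : set T) (n : nat) : set T :=
  match n with
  | 0 => X (* unused: only n >= 1 is considered *)
  | 1 => X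
  | m.+1 => [set y | exists x z, X x /\ set_pow X m z /\ y = mul x z]
  end.

Definition idempotent_in (e : T) : Prop := P e /\ mul e e = e.

Definition principal_right (e : T) : set T := [set y | exists a, P a /\ y = mul e a].

Definition right_ideal (I : set T) : Prop :=
  [/\ I `<=` P, I zero,
      forall x y, I x -> I y -> I (add x y),
      forall x, I x -> I (opp x) &
      forall x a, I x -> P a -> I (mul x a)].

Definition gen_right_Baer_on : Prop :=
  forall X : set T, X `<=` P -> X !=set0 ->
    exists n : nat, exists e : T,
      (0 < n)%N /\ idempotent_in e /\ r_ann (set_pow X n) = principal_right e.

Definition gen_right_quasi_Baer_on : Prop :=
  forall I : set T, right_ideal I ->
    exists n : nat, exists e : T,
      (0 < n)%N /\ idempotent_in e /\ r_ann (set_pow I n) = principal_right e.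
End GenRing.

Definition gen_right_Baer (R : pzRingType) : Prop :=
  gen_right_Baer_on [set: R] *%R 0.
Definition gen_right_quasi_Baer (R : pzRingType) : Prop :=
  gen_right_quasi_Baer_on [set: R] +%R *%R (fun x => - x) 0.

Definition gps_gen_right_Baer {S : choiceType} (mul : S -> S -> S)
  (le : S -> S -> Prop) (R : pzRingType) : Prop :=
  gen_right_Baer_on (@gps S le R) (@gps_mul S mul R) gps_zero.
Definition gps_gen_right_quasi_Baer {S : choiceType} (mul : S -> S -> S)
  (le : S -> S -> Prop) (R : pzRingType) : Prop :=
  gen_right_quasi_Baer_on (@gps S le R) gps_add (@gps_mul S mul R) gps_opp gps_zero.

Definition S_Armendariz {S : choiceType} (mul : S -> S -> S)
  (le : S -> S -> Prop) (R : pzRingType) : Prop :=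
  forall f g : S -> R, gps le f -> gps le g -> gps_mul mul f g = gps_zero ->
    forall u v, f u * g v = 0.

(* Main.v *)
Require Import Defs.
From mathcomp Require Import all_boot all_order all_algebra.
From mathcomp Require Import boolp classical_sets functions cardinality fsbigop.
From HB Require Import structures.
Set Implicit Arguments. Unset Strict Implicit. Unset Printing Implicit Defensive.
Import Order.TTheory GRing.Theory.
Local Open Scope classical_set_scope.

Lemma inf_seq (T : choiceType) (A : set T) : infinite_set A ->
  exists e : nat -> T, (forall n, A (e n)) /\ injective e.
Proof.
move=> Ainf.
have H : forall s : seq T, exists x, A x /\ x \notin s.
  move=> s; apply: contrapT => Hn; apply: Ainf.
  apply: (sub_finite_set _ (finite_seq s)) => x Ax /=.
  apply: contrapT => xs; apply: Hn; exists x; split => //; exact/negP.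
have [f Hf] := choice H.
pose h := fix h n := if n is m.+1 then f (h m) :: h m else [::].
exists (fun n => f (h n)); split; first by move=> n; case: (Hf (h n)).
have sub : forall i j, (i < j)%N -> f (h i) \in h j.
  move=> i j; elim: j => // j IH; rewrite ltnS leq_eqVlt => /orP[/eqP->|/IH].
    by rewrite /= inE eqxx.
  by rewrite /= inE => ->; rewrite orbT.
move=> i j eqij; apply/eqP; rewrite eqn_leq; apply/andP; split; rewrite leqNgt; apply/negP => lt.
  by have := sub _ _ lt; rewrite -eqij; case: (Hf (h i)) => _ /negP.
by have := sub _ _ lt; rewrite eqij; case: (Hf (h j)) => _ /negP.
Qed.

Lemma nat_fin_bound (A : set nat) : finite_set A -> exists N, forall i, A i -> (i < N)%N.
Proof.
move=> /finite_seqP[s ->]; exists (foldr (fun x m => maxn x.+1 m) 0%N s).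
move=> i /=; elim: s => // x s IH; rewrite inE => /orP[/eqP->|/IH].
  by rewrite /= leq_max leqnn.
by move=> lt /=; rewrite leq_max lt orbT.
Qed.

Lemma extract (P : nat -> Prop) : (forall N, exists i, (N <= i)%N /\ P i) ->
  exists psi : nat -> nat, (forall k, (psi k < psi k.+1)%N) /\ forall k, P (psi k).
Proof.
move=> H; have [f Hf] := choice H.
pose psi := fix psi k := if k is m.+1 then f (psi m).+1 else f 0%N.
exists psi; split => [k|[|k]] /=.
- by case: (Hf (psi k).+1).
- by case: (Hf 0%N).
- by case: (Hf (psi k).+1).
Qed.

Lemma incr_lt (phi : nat -> nat) : (forall i, (phi i < phi i.+1)%N) ->
  forall i j, (i < j)%N -> (phi i < phi j)%N.
Proof.
move=> H i j; elim: j => // j IH; rewrite ltnS leq_eqVlt => /orP[/eqP->//|/IH lt].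
exact: ltn_trans lt (H j).
Qed.

Section Ord.
Variables (S : choiceType) (mul : S -> S -> S) (one : S) (le : S -> S -> Prop).
Hypothesis HS : strictly_ordered_monoid mul one le.

Lemma le_refl x : le x x. Proof. by case: HS => -[_ [r _ _] _] _. Qed.
Lemma le_anti x y : le x y -> le y x -> x = y. Proof. by case: HS => -[_ [_ a _] _] _; exact: a. Qed.
Lemma le_trans x y z : le x y -> le y z -> le x z. Proof. by case: HS => -[_ [_ _ t] _] _; exact: t. Qed.
Lemma le_mulr u v t : le u v -> le (mul u t) (mul v t). Proof. by case: HS => -[_ _ m] _ h; case: (m _ _ t h). Qed.
Lemma le_mull u v t : le u v -> le (mul t u) (mul t v). Proof. by case: HS => -[_ _ m] _ h; case: (m _ _ t h). Qed.
Lemma lt_mulr u v t : strict_of le u v -> strict_of le (mul u t) (mul v t). Proof. by case: HS => _ m h; case: (m _ _ t h). Qed.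
Lemma lt_mull u v t : strict_of le u v -> strict_of le (mul t u) (mul t v). Proof. by case: HS => _ m h; case: (m _ _ t h). Qed.
Lemma mulSA x y z : mul x (mul y z) = mul (mul x y) z. Proof. by case: HS => -[[a _ _] _ _] _. Qed.
Lemma mul1S x : mul one x = x. Proof. by case: HS => -[[_ a _] _ _] _. Qed.
Lemma mulS1 x : mul x one = x. Proof. by case: HS => -[[_ _ a] _ _] _. Qed.

Lemma chain_le (b : nat -> S) : (forall i, le (b i) (b i.+1)) ->
  forall i j, (i <= j)%N -> le (b i) (b j).
Proof.
move=> H i j; elim: j => [|j IH]; first by rewrite leqn0 => /eqP->; apply: le_refl.
rewrite leq_eqVlt => /orP[/eqP->|]; first exact: le_refl.
by rewrite ltnS => /IH h; apply: le_trans h (H j).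
Qed.

Definition good (X : set S) := forall a : nat -> S, (forall n, X (a n)) ->
  exists phi : nat -> nat, (forall i, (phi i < phi i.+1)%N) /\
    forall i, le (a (phi i)) (a (phi i.+1)).

Lemma good_pair X : artinian_set le X -> narrow_set le X ->
  forall b, (forall n, X (b n)) -> exists i j, (i < j)%N /\ le (b i) (b j).
Proof.
move=> art nar b Xb; apply: contrapT => bad.
pose V := [set b n | n in [set: nat]].
pose minimal m := V m /\ forall w, V w -> le w m -> w = m.
have VX : V `<=` X by move=> _ [n _ <-].
have C1 : forall v, V v -> exists m, minimal m /\ le m v.
  move=> v Vv; apply: contrapT => nom.
  have step : forall w, exists w', (V w /\ le w v) -> V w' /\ strict_of le w' w.
    move=> w; case: (EM (V w /\ le w v)) => [[Vw wv]|]; last by move=> n; exists w.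
    have : ~ minimal w by move=> mw; apply: nom; exists w.
    move=> /not_andP[//|/existsNP[w' /not_implyP[Vw' /not_implyP[w'w ne]]]].
    by exists w' => _; split => //; split.
  have [f Hf] := choice step.
  pose c n := iter n f v.
  have Hc : forall n, V (c n) /\ le (c n) v.
    elim => [|n [IH1 IH2]] /=; first by split => //; apply: le_refl.
    have [V' [l' _]] := Hf _ (conj IH1 IH2); split => //; exact: le_trans l' IH2.
  apply: art; exists c => n; split; first by apply: VX; case: (Hc n).
  by case: (Hf _ (Hc n)).
have finM : finite_set minimal.
  apply: nar; first by move=> m [/VX].
  move=> x y [Vx mx] [Vy my] nxy; split => h.
  - by apply: nxy; apply: my.
  - by apply: nxy; symmetry; apply: mx.
have idx : forall m, exists t, minimal m -> b t = m.
  move=> m; case: (EM (minimal m)) => [[[t _ <-] _]|n]; first by exists t.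
  by exists 0%N.
have [g Hg] := choice idx.
have [N HN] := nat_fin_bound (finite_image g finM).
have [m [mm lmN]] := C1 (b N) (ex_intro2 _ _ N I erefl).
apply: bad; exists (g m), N; split; first by apply: HN; exists m.
by rewrite Hg.
Qed.

Lemma an_good X : artinian_set le X -> narrow_set le X -> good X.
Proof.
move=> art nar a Xa.
pose T i := forall j, (i < j)%N -> ~ le (a i) (a j).
case: (EM (forall N, exists i, (N <= i)%N /\ T i)) => [H|].
  have [psi [inc Tp]] := extract H.
  have [k [l [kl le_kl]]] := good_pair art nar (fun k => Xa (psi k)).
  by case: (Tp k (psi l) (incr_lt inc kl)).
move=> /existsNP[N HN].
have nxt : forall i, exists j, (N <= i)%N -> (i < j)%N /\ le (a i) (a j).
  move=> i; case: (EM (N <= i)%N) => [Ni|]; last by exists i.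
  have : ~ T i by move=> Ti; apply: HN; exists i.
  move=> /existsNP[j /not_implyP[ij /contrapT lij]]; by exists j.
have [f Hf] := choice nxt.
pose phi k := iter k f N.
have Nphi : forall k, (N <= phi k)%N.
  elim => // k IH /=; have [lt _] := Hf _ IH; exact: leq_trans IH (ltnW lt).
by exists phi; split => i; case: (Hf _ (Nphi i)).
Qed.

Lemma dec_chain (a : nat -> S) : (forall n, strict_of le (a n.+1) (a n)) ->
  forall i j, (i < j)%N -> strict_of le (a j) (a i).
Proof.
move=> H i j; elim: j => // j IH; rewrite ltnS leq_eqVlt => /orP[/eqP->//|/IH [l ne]].
have [l' ne'] := H j; split; first exact: le_trans l' l.
move=> e; apply: ne; apply: le_anti => //; rewrite -e; exact: l'.
Qed.

Lemma good_art X : good X -> artinian_set le X.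
Proof.
move=> g [a Ha]; have [phi [inc lphi]] := g a (fun n => (Ha n).1).
have [l ne] := dec_chain (fun n => (Ha n).2) (inc 0%N).
by apply: ne; apply: le_anti l (lphi 0%N).
Qed.

Lemma good_nar X : good X -> narrow_set le X.
Proof.
move=> g Y YX anti; apply: contrapT => /inf_seq [e [Ye inje]].
have [phi [inc lphi]] := g e (fun n => YX _ (Ye n)).
have ne : e (phi 0%N) <> e (phi 1%N).
  by move=> /inje h; have := inc 0%N; rewrite h ltnn.
by case: (anti _ _ (Ye _) (Ye _) ne) => + _; apply; apply: lphi.
Qed.

Lemma good_sub X Y : X `<=` Y -> good Y -> good X.
Proof. by move=> XY gY a Xa; apply: gY => n; apply: XY. Qed.

Lemma good_U X Y : good X -> good Y -> good (X `|` Y).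
Proof.
move=> gX gY a Ha.
case: (EM (forall N, exists i, (N <= i)%N /\ X (a i))) => [H|].
  have [psi [inc Xp]] := extract H.
  have [phi [inc' lp]] := gX _ Xp.
  exists (fun i => psi (phi i)); split => i /=; last exact: lp.
  exact (incr_lt inc (inc' i)).
move=> /existsNP[N HN].
have Yb : forall n, Y (a (n + N)%N).
  move=> n; case: (Ha (n + N)%N) => // Xn; exfalso; apply: HN; exists (n + N)%N.
  by rewrite leq_addl.
have [phi [inc lp]] := gY _ Yb.
exists (fun i => (phi i + N)%N); split => i; last exact: lp.
by rewrite ltn_add2r.
Qed.

Lemma good1 x : good [set x].
Proof.
move=> a Ha; exists id; split => // i; rewrite (Ha i) (Ha i.+1); exact: le_refl.
Qed.

Definition prodset (X Y : set S) := [set z | exists x y, X x /\ Y y /\ z = mul x y].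

Lemma good_mul X Y : good X -> good Y -> good (prodset X Y).
Proof.
move=> gX gY c Hc.
have ch : forall n, exists p : S * S, X p.1 /\ Y p.2 /\ c n = mul p.1 p.2.
  by move=> n; have [x [y [? [? ?]]]] := Hc n; exists (x, y).
have [p Hp] := choice ch.
have [phi [inc lp]] := gX (fun n => (p n).1) (fun n => (Hp n).1).
have [psi [inc' lq]] := gY (fun n => (p (phi n)).2) (fun n => (Hp _).2.1).
exists (fun i => phi (psi i)); split => i; first exact (incr_lt inc (inc' i)).
rewrite (Hp (phi (psi i))).2.2 (Hp (phi (psi i.+1))).2.2; apply: (le_trans (y := mul (p (phi (psi i.+1))).1 (p (phi (psi i))).2)).
  by apply: le_mulr; apply: (@chain_le (fun n => (p (phi n)).1) lp); apply: ltnW; exact (inc' i).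
exact: le_mull.
Qed.

Definition pairs (X Y : set S) s := [set p : S * S | X p.1 /\ Y p.2 /\ mul p.1 p.2 = s].

Lemma good_pairs X Y s : good X -> good Y -> finite_set (pairs X Y s).
Proof.
move=> gX gY; apply: contrapT => /inf_seq [e [He inje]].
have [phi [inc lp]] := gX (fun n => (e n).1) (fun n => (He n).1).
have [psi [inc' lq]] := gY (fun n => (e (phi n)).2) (fun n => (He _).2.1).
set i := phi (psi 0%N); set j := phi (psi 1%N).
have lx : le (e i).1 (e j).1 by apply: (@chain_le (fun n => (e (phi n)).1) lp); apply: ltnW; exact (incr_lt inc' (ltn0Sn 0)).
have ly : le (e i).2 (e j).2 by apply: lq.
have nij : e i <> e j by move=> /inje h; have := incr_lt inc (inc' 0%N); rewrite -/i -/j h ltnn.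
have si := (He i).2.2; have sj := (He j).2.2.
case: (EM ((e i).1 = (e j).1)) => ex.
  have ney : (e i).2 <> (e j).2 by move=> ey; apply: nij; case: (e i) (e j) ex ey => ? ? [? ?] /= -> ->.
  have [_ ne] := lt_mull (e i).1 (conj ly ney).
  by apply: ne; rewrite si ex sj.
have [l1 ne1] := lt_mulr (e i).2 (conj lx ex).
have l2 := le_mull (e j).1 ly.
apply: ne1; apply: le_anti l1 _; rewrite si -sj; exact: l2.
Qed.

End Ord.

Local Open Scope ring_scope.

Section Alg.
Variables (R : pzRingType) (S : choiceType) (mul : S -> S -> S) (one : S) (le : S -> S -> Prop).
Hypothesis HS : strictly_ordered_monoid mul one le.

Local Notation gps := (@gps S le R).
Local Notation pmul := (@gps_mul S mul R).
Local Notation good := (good le).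
Local Notation T s := [set p : S * S | mul p.1 p.2 = s].

Lemma wid (I : choiceType) (P D : set I) (F : I -> R) : D `<=` P ->
  (forall i, P i -> F i != 0 -> D i) -> \sum_(i \in P) F i = \sum_(i \in D) F i.
Proof.
move=> DP H; apply/esym/fsbig_widen => // i [Pi nDi] /=.
by case: (eqVneq (F i) 0) => // /(H _ Pi).
Qed.

Lemma fsum_mull (I : choiceType) (D : set I) (F : I -> R) c : finite_set D ->
  c * \sum_(i \in D) F i = \sum_(i \in D) c * F i.
Proof. by move=> fD; rewrite !fsbig_finite // mulr_sumr. Qed.

Lemma fsum_mulr (I : choiceType) (D : set I) (F : I -> R) c : finite_set D ->
  (\sum_(i \in D) F i) * c = \sum_(i \in D) F i * c.
Proof. by move=> fD; rewrite !fsbig_finite // mulr_suml. Qed.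

Lemma fsum_dep (I J : choiceType) (A : set I) (B : I -> set J) (F : I -> J -> R) :
  finite_set A -> (forall i, A i -> finite_set (B i)) ->
  \sum_(i \in A) \sum_(j \in B i) F i j = \sum_(k \in A `*`` B) F k.1 k.2.
Proof.
move=> fA fB; have fAB := finite_setXR fA fB.
pose U := snd @` (A `*`` B).
have fU : finite_set U by apply: finite_image.
pose G i j := if j \in B i then F i j else 0.
transitivity (\sum_(i \in A) \sum_(j \in U) G i j).
  apply: eq_fsbigr => i /set_mem Ai.
  rewrite (eq_fsbigr (G i)); last by move=> j /set_mem Bj; rewrite /G (mem_set Bj).
  apply: fsbig_widen; first by move=> j Bj; exists (i, j) => //; split.
  by move=> j [_ nB]; rewrite /G /= memNset.
rewrite pair_fsbig //.
rewrite -(fsbig_widen (A `*`` B) (A `*` U) (fun k => G k.1 k.2)).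
- by apply: eq_fsbigr => -[i j] /set_mem [/= Ai Bj]; rewrite /G (mem_set Bj).
- by move=> [i j] [/= Ai Bj]; split => //; exists (i, j) => //; split.
- move=> [i j] [[/= Ai _] nB]; have nBj : ~ B i j by move=> Bj; apply: nB; split.
  by rewrite /G /= (memNset nBj).
Qed.

Lemma gps_good f : gps f -> good (supp f).
Proof. by move=> [a n]; apply: (an_good HS). Qed.

Lemma good_gps f : good (supp f) -> gps f.
Proof. by move=> g; split; [apply: (good_art HS g)|apply: good_nar g]. Qed.

Lemma supp_mul f g : supp (pmul f g) `<=` prodset mul (supp f) (supp g).
Proof.
move=> s /= H; apply: contrapT => ns; move/eqP: H; apply.
apply: fsbig1 => p /= ps; case: (eqVneq (f p.1) 0) => [->|fp]; first by rewrite mul0r.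
case: (eqVneq (g p.2) 0) => [->|gp]; first by rewrite mulr0.
by exfalso; apply: ns; exists p.1, p.2; split.
Qed.

Lemma gps_mulP f g : gps f -> gps g -> gps (pmul f g).
Proof.
move=> /gps_good gf /gps_good gg; apply: good_gps.
exact: good_sub (@supp_mul f g) (good_mul HS gf gg).
Qed.

Lemma gps_addP f g : gps f -> gps g -> gps (gps_add f g).
Proof.
move=> /gps_good gf /gps_good gg; apply: good_gps.
apply: good_sub (good_U gf gg) => s; rewrite /supp /gps_add /= => H.
case: (eqVneq (f s) 0) => [fs|]; last by left.
by right; move: H; rewrite fs add0r.
Qed.

Lemma gps_oppP f : gps f -> gps (gps_opp f).
Proof.
move=> /gps_good gf; apply: good_gps; apply: good_sub gf => s.
by rewrite /supp /gps_opp /= oppr_eq0.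
Qed.

Lemma gps_zeroP : gps gps_zero.
Proof. by apply: good_gps => a Ha; have := Ha 0%N; rewrite /supp /gps_zero /= eqxx. Qed.

Definition delta (c : R) : S -> R := fun s => if s == one then c else 0.

Lemma gps_deltaP c : gps (delta c).
Proof.
apply: good_gps; apply: good_sub (good1 HS (x := one)) => s; rewrite /supp /delta /=.
by case: (eqVneq s one) => [->//|ne]; rewrite eqxx.
Qed.

Lemma mul_deltal c g : pmul (delta c) g = fun s => c * g s.
Proof.
apply: funext => s; rewrite /gps_mul (wid (D := [set (one, s)])).
- by rewrite fsbig_set1 /delta /= eqxx.
- by move=> p /= ->; rewrite (mul1S HS).
- move=> [u v] /= uv; rewrite /delta; case: (eqVneq u one) => [eu|ne]; last by rewrite mul0r eqxx.
  by move: uv; rewrite eu (mul1S HS) => ->.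
Qed.

Lemma mul_deltar g c : pmul g (delta c) = fun s => g s * c.
Proof.
apply: funext => s; rewrite /gps_mul (wid (D := [set (s, one)])).
- by rewrite fsbig_set1 /delta /= eqxx.
- by move=> p /= ->; rewrite (mulS1 HS).
- move=> [u v] /= uv; rewrite /delta; case: (eqVneq v one) => [ev|ne]; last by rewrite mulr0 eqxx.
  by move: uv; rewrite ev (mulS1 HS) => ->.
Qed.

Lemma delta_mul a b : pmul (delta a) (delta b) = delta (a * b).
Proof.
rewrite mul_deltal; apply: funext => s; rewrite /delta.
by case: eqP; rewrite ?mulr0.
Qed.

Definition Dp (f g : S -> R) s := pairs mul (supp f) (supp g) s.

Lemma finDp f g s : gps f -> gps g -> finite_set (Dp f g s).
Proof. by move=> /gps_good gf /gps_good gg; exact: (good_pairs HS s gf gg). Qed.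

Lemma pmulE f g s : pmul f g s = \sum_(p \in Dp f g s) f p.1 * g p.2.
Proof.
rewrite /gps_mul; apply: wid; first by move=> p [_ [_ h]]; exact: h.
move=> p /= ps H; split; last split => //.
- by apply/eqP => h; move: H; rewrite h mul0r eqxx.
- by apply/eqP => h; move: H; rewrite h mulr0 eqxx.
Qed.

End Alg.

Section Alg2.
Variables (R : pzRingType) (S : choiceType) (mul : S -> S -> S) (one : S) (le : S -> S -> Prop).
Hypothesis HS : strictly_ordered_monoid mul one le.

Local Notation gps := (@gps S le R).
Local Notation pmul := (@gps_mul S mul R).
Local Notation good := (good le).
Local Notation T s := [set p : S * S | mul p.1 p.2 = s].

Lemma wid_pairs (f k : S -> R) X Y s : supp f `<=` X -> supp k `<=` Y ->
  \sum_(p \in T s) f p.1 * k p.2 = \sum_(p \in pairs mul X Y s) f p.1 * k p.2.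
Proof.
move=> fX kY; apply: wid; first by move=> p [_ [_ h]]; exact: h.
move=> p /= ps H; split; last split => //.
- by apply: fX; apply/eqP => h; move: H; rewrite h mul0r eqxx.
- by apply: kY; apply/eqP => h; move: H; rewrite h mulr0 eqxx.
Qed.

Lemma pmulDr f g h : gps f -> gps g -> gps h ->
  pmul f (gps_add g h) = gps_add (pmul f g) (pmul f h).
Proof.
move=> gf gg gh; apply: funext => s; rewrite /gps_add /gps_mul.
have fin : finite_set (pairs mul (supp f) (supp g `|` supp h) s).
  by apply: (good_pairs HS s (gps_good HS gf) (good_U (gps_good HS gg) (gps_good HS gh))).
have sub1 : supp g `<=` supp g `|` supp h by move=> x; left.
have sub2 : supp h `<=` supp g `|` supp h by move=> x; right.
have sub3 : supp (gps_add g h) `<=` supp g `|` supp h.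
  move=> x; rewrite /supp /gps_add /= => H.
  case: (eqVneq (g x) 0) => [gx|]; last by left.
  by right; move: H; rewrite gx add0r.
rewrite (wid_pairs s (@subset_refl _ (supp f)) sub3).
rewrite (wid_pairs s (@subset_refl _ (supp f)) sub1).
rewrite (wid_pairs s (@subset_refl _ (supp f)) sub2).
by rewrite !fsbig_finite //= -big_split /=; apply: eq_bigr => p _; rewrite mulrDr.
Qed.

Lemma pmulDl f g h : gps f -> gps g -> gps h ->
  pmul (gps_add g h) f = gps_add (pmul g f) (pmul h f).
Proof.
move=> gf gg gh; apply: funext => s; rewrite /gps_add /gps_mul.
have fin : finite_set (pairs mul (supp g `|` supp h) (supp f) s).
  by apply: (good_pairs HS s (good_U (gps_good HS gg) (gps_good HS gh)) (gps_good HS gf)).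
have sub1 : supp g `<=` supp g `|` supp h by move=> x; left.
have sub2 : supp h `<=` supp g `|` supp h by move=> x; right.
have sub3 : supp (gps_add g h) `<=` supp g `|` supp h.
  move=> x; rewrite /supp /gps_add /= => H.
  case: (eqVneq (g x) 0) => [gx|]; last by left.
  by right; move: H; rewrite gx add0r.
rewrite (wid_pairs s sub3 (@subset_refl _ (supp f))).
rewrite (wid_pairs s sub1 (@subset_refl _ (supp f))).
rewrite (wid_pairs s sub2 (@subset_refl _ (supp f))).
by rewrite !fsbig_finite //= -big_split /=; apply: eq_bigr => p _; rewrite mulrDl.
Qed.

Lemma pmulNr f g : gps f -> gps g -> pmul f (gps_opp g) = gps_opp (pmul f g).
Proof.
move=> gf gg; apply: funext => s; rewrite /gps_opp !pmulE.
have -> : Dp mul f (fun s => - g s) s = Dp mul f g s.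
  by apply: funext => p; rewrite /Dp /pairs /supp /= oppr_eq0.
have fD := finDp HS s gf gg.
by rewrite !fsbig_finite //= -sumrN; apply: eq_bigr => p _; rewrite mulrN.
Qed.

Lemma pmulNl f g : gps f -> gps g -> pmul (gps_opp g) f = gps_opp (pmul g f).
Proof.
move=> gf gg; apply: funext => s; rewrite /gps_opp !pmulE.
have -> : Dp mul (fun s => - g s) f s = Dp mul g f s.
  by apply: funext => p; rewrite /Dp /pairs /supp /= oppr_eq0.
have fD := finDp HS s gg gf.
by rewrite !fsbig_finite //= -sumrN; apply: eq_bigr => p _; rewrite mulNr.
Qed.

Lemma pmulA f g h : gps f -> gps g -> gps h ->
  pmul (pmul f g) h = pmul f (pmul g h).
Proof.
move=> gf gg gh; apply: funext => s.
have Gf := gps_good HS gf; have Gg := gps_good HS gg; have Gh := gps_good HS gh.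
pose Trip := [set t : (S * S) * S | supp f t.1.1 /\ supp g t.1.2 /\ supp h t.2 /\
   mul (mul t.1.1 t.1.2) t.2 = s].
pose D1 := pairs mul (prodset mul (supp f) (supp g)) (supp h) s.
pose D1' := pairs mul (supp f) (prodset mul (supp g) (supp h)) s.
have fD1 : finite_set D1 by apply: (good_pairs HS s (good_mul HS Gf Gg) Gh).
have fD1' : finite_set D1' by apply: (good_pairs HS s Gf (good_mul HS Gg Gh)).
transitivity (\sum_(t \in Trip) f t.1.1 * g t.1.2 * h t.2).
  rewrite /gps_mul (wid_pairs s (@supp_mul R S mul f g) (@subset_refl _ (supp h))) -/D1.
  rewrite (eq_fsbigr (fun p => (\sum_(q \in Dp mul f g p.1) f q.1 * g q.2) * h p.2)); last first.
    by move=> p _; rewrite -pmulE.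
  rewrite (eq_fsbigr (fun p => \sum_(q \in Dp mul f g p.1) f q.1 * g q.2 * h p.2)); last first.
    by move=> p _; rewrite fsum_mulr //; apply: (finDp HS p.1 gf gg).
  rewrite (fsum_dep (fun p q => f q.1 * g q.2 * h p.2)) //; last by move=> p _; apply: (finDp HS p.1 gf gg).
  symmetry; apply: (reindex_fsbig (fun k : (S * S) * (S * S) => ((k.2.1, k.2.2), k.1.2))).
  split.
  - move=> [[p1 p2] [q1 q2]] [/= [_ [hp2 e1]] [fq1 [gq2 e2]]] /=.
    by split => //; split => //; split => //; rewrite /= in e2; rewrite e2.
  - move=> [[p1 p2] [q1 q2]] [[p1' p2'] [q1' q2']] /set_mem [/= [_ [_ _]] [_ [_ e2]]].
    move=> /set_mem [/= [_ [_ _]] [_ [_ e2']]] /= [eq1 eq2 eq3].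
    by rewrite /= in e2 e2'; subst.
  - move=> [[a b] c] [fa [gb [hc e]]]; exists ((mul a b, c), (a, b)) => //.
    split => /=; last by split.
    by split => //; exists a, b.
transitivity (\sum_(t \in Trip) f t.1.1 * (g t.1.2 * h t.2)); first by apply: eq_fsbigr => t _; rewrite mulrA.
rewrite /gps_mul (wid_pairs s (@subset_refl _ (supp f)) (@supp_mul R S mul g h)) -/D1'.
rewrite (eq_fsbigr (fun p => f p.1 * \sum_(q \in Dp mul g h p.2) g q.1 * h q.2)); last first.
  by move=> p _; rewrite -pmulE.
rewrite (eq_fsbigr (fun p => \sum_(q \in Dp mul g h p.2) f p.1 * (g q.1 * h q.2))); last first.
  by move=> p _; rewrite fsum_mull //; apply: (finDp HS p.2 gg gh).
rewrite (fsum_dep (fun p q => f p.1 * (g q.1 * h q.2))) //; last by move=> p _; apply: (finDp HS p.2 gg gh).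
apply: (reindex_fsbig (fun k : (S * S) * (S * S) => ((k.1.1, k.2.1), k.2.2))).
split.
- move=> [[p1 p2] [q1 q2]] [/= [fp1 [_ e1]] [gq1 [hq2 e2]]] /=.
  split => //; split => //; split => //; rewrite /= in e1 e2.
  by rewrite -(mulSA HS) e2 e1.
- move=> [[p1 p2] [q1 q2]] [[p1' p2'] [q1' q2']] /set_mem [/= [_ [_ _]] [_ [_ e2]]].
  move=> /set_mem [/= [_ [_ _]] [_ [_ e2']]] /= [eq1 eq2 eq3].
  by rewrite /= in e2 e2'; subst.
- move=> [[a b] c] [fa [gb [hc e]]]; exists ((a, mul b c), (b, c)) => //.
  split => /=; last by split.
  split => //; split; first by exists b, c.
  by rewrite (mulSA HS).
Qed.

End Alg2.

Lemma set_pow_mono (T : Type) (m : T -> T -> T) (X Y : set T) n :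
  X `<=` Y -> set_pow m X n `<=` set_pow m Y n.
Proof.
move=> XY; case: n => [|n] //; elim: n => [|n IH] //.
by move=> y /= [x [z [Xx [Pz ->]]]]; exists x, z; split; [apply: XY|split; [apply: IH|]].
Qed.

Section Ring.
Variables (R : pzRingType) (S : choiceType) (mul : S -> S -> S) (one : S) (le : S -> S -> Prop).
Hypothesis HS : strictly_ordered_monoid mul one le.
Hypothesis Arm : S_Armendariz mul le R.

Local Notation gps := (@gps S le R).
Local Notation pmul := (@gps_mul S mul R).
Local Notation dl := (@delta R S one).
Local Notation RA Y := (r_ann [set: R] *%R 0 Y).
Local Notation AA Z := (r_ann gps pmul gps_zero Z).

Lemma idem_const E : gps E -> pmul E E = E -> E = dl (E one) /\ E one * E one = E one.
Proof.
move=> gE EE.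
pose U := gps_add (dl 1) (gps_opp E).
have gU : gps U by apply: (gps_addP HS (gps_deltaP HS 1) (gps_oppP HS gE)).
have EU : pmul E U = gps_zero.
  rewrite /U (pmulDr HS gE (gps_deltaP HS 1) (gps_oppP HS gE)) (pmulNr HS gE gE) EE.
  rewrite (mul_deltar HS); apply: funext => s; rewrite /gps_add /gps_opp /gps_zero.
  by rewrite mulr1 subrr.
have UE : pmul U E = gps_zero.
  rewrite /U (pmulDl HS gE (gps_deltaP HS 1) (gps_oppP HS gE)) (pmulNl HS gE gE) EE.
  rewrite (mul_deltal HS); apply: funext => s; rewrite /gps_add /gps_opp /gps_zero.
  by rewrite mul1r subrr.
have A1 := Arm gE gU EU; have A2 := Arm gU gE UE.
have H1 u : E u = E u * E one.
  have := A1 u one; rewrite /U /gps_add /gps_opp /delta eqxx mulrDr mulr1 mulrN.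
  by move/eqP; rewrite subr_eq0 => /eqP.
have H2 u v : v != one -> E u * E v = 0.
  move=> nv; have := A1 u v; rewrite /U /gps_add /gps_opp /delta (negbTE nv) add0r mulrN.
  by move/eqP; rewrite oppr_eq0 => /eqP.
have H3 v : E v = E one * E v.
  have := A2 one v; rewrite /U /gps_add /gps_opp /delta eqxx mulrDl mul1r mulNr.
  by move/eqP; rewrite subr_eq0 => /eqP.
split; last by rewrite -H1.
apply: funext => s; rewrite /delta; case: (eqVneq s one) => [->//|ns].
by rewrite H3 H2.
Qed.

Lemma from_A (Y : set R) (Z : set (S -> R)) E :
  idempotent_in gps pmul E -> AA Z = principal_right gps pmul E ->
  (forall g, gps g -> (AA Z g <-> forall v, RA Y (g v))) ->
  exists e, idempotent_in [set: R] *%R e /\ RA Y = principal_right [set: R] *%R e.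
Proof.
move=> [gE EE] HZ ch; have [Ed ee] := idem_const gE EE.
exists (E one); split => //; apply/seteqP; split => y.
- move=> Yy; have gd : gps (dl y) by apply: (gps_deltaP HS y).
  have : AA Z (dl y).
    apply/(ch _ gd) => v; rewrite /delta; case: (v == one) => //.
    by split => // x _; rewrite mulr0.
  rewrite HZ => -[a [ga ea]]; exists (a one); split => //.
  have := congr1 (fun f => f one) ea; rewrite Ed (mul_deltal HS) /= /delta eqxx => <-.
  by [].
- move=> [r [_ ->]].
  have : AA Z (dl (E one * r)).
    rewrite HZ; exists (dl r); split; first exact: (gps_deltaP HS r).
    by rewrite {2}Ed (delta_mul HS).
  move/(ch _ (gps_deltaP HS _)) => /(_ one).
  by rewrite /delta eqxx.
Qed.


Definition coefs (X : set (S -> R)) : set R := [set c | exists f u, X f /\ c = f u].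
Definition PP (X : set (S -> R)) := [set q : (S -> R) * R | X q.1 /\ exists u, q.2 = q.1 u].
Definition pmul2 (q q' : (S -> R) * R) := (pmul q.1 q'.1, q.2 * q'.2).

Lemma setpow_gps X : X `<=` gps -> forall m F, set_pow pmul X m.+1 F -> gps F.
Proof.
move=> XA; elim => [|m IH] F /=; first exact: XA.
by move=> [x [z [Xx [Pz ->]]]]; exact: (gps_mulP HS (XA _ Xx) (IH _ Pz)).
Qed.

Lemma Qlem X : X `<=` gps -> forall m F, set_pow pmul X m.+1 F ->
  forall w u y, (forall z, set_pow *%R (coefs X) m.+1 z -> u * z * y = 0) -> u * F w * y = 0.
Proof.
move=> XA; elim => [|m IH] F.
  by move=> /= XF w u y H; apply: H; exists F, w.
move=> /= [x [z [Xx [Pz ->]]]] w u y H.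
have gx := XA _ Xx; have gz := setpow_gps XA Pz.
rewrite pmulE fsum_mull; last exact: (finDp HS w gx gz).
rewrite fsum_mulr; last exact: (finDp HS w gx gz).
apply: fsbig1 => p _; rewrite mulrA.
apply: (IH _ Pz) => z' Pz'.
have := H (x p.1 * z'); rewrite !mulrA; apply.
by exists (x p.1), z'; split; [exists x, p.1|].
Qed.

Lemma Qkill X m F g : X `<=` gps -> set_pow pmul X m.+1 F ->
  (forall v z, set_pow *%R (coefs X) m.+1 z -> z * g v = 0) -> pmul F g = gps_zero.
Proof.
move=> XA PF H; apply: funext => w; rewrite /gps_mul /gps_zero; apply: fsbig1 => p _.
have := Qlem XA PF p.1 (u := 1) (y := g p.2); rewrite mul1r; apply.
by move=> z Pz; rewrite mul1r; apply: H.
Qed.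

Lemma MA_fst X : forall m q, set_pow pmul2 (PP X) m.+1 q -> set_pow pmul X m.+1 q.1.
Proof.
elim => [|m IH] q /=; first by case.
by move=> [x [z [[Xx _] [Pz ->]]]]; exists x.1, z.1; split => //; split => //; apply: IH.
Qed.

Lemma MA_snd X : forall m z, set_pow *%R (coefs X) m.+1 z ->
  exists F, set_pow pmul2 (PP X) m.+1 (F, z).
Proof.
elim => [|m IH] z /=.
  by move=> [f [u [Xf ->]]]; exists f; split => //; exists u.
move=> [c [z' [[f [u [Xf ->]]] [Pz' ->]]]]; have [F PF] := IH _ Pz'.
exists (pmul f F), (f, f u), (F, z'); split; first by split => //; exists u.
by split.
Qed.

Lemma MA_shift X c : X `<=` gps -> forall m q, set_pow pmul2 (PP X) m.+1 q ->
  set_pow pmul2 (PP (X `|` [set pmul (dl c) h | h in X])) m.+1 (pmul (dl c) q.1, c * q.2).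
Proof.
move=> XA [|m] q /=.
  move=> [Xq [u ->]]; split; first by right; exists q.1.
  by exists u; rewrite (mul_deltal HS).
move=> [[h d] [q'' [[/= Xh [u ->]] [Pq ->]]]] /=.
have gq := setpow_gps XA (MA_fst Pq).
exists (pmul (dl c) h, c * h u), q''; split.
  split; first by right; exists h.
  by exists u; rewrite (mul_deltal HS).
split.
  have sub : PP X `<=` PP (X `|` [set pmul (dl c) h | h in X]) by move=> z [Xz Hz]; split => //; left.
  exact: (set_pow_mono (n := m.+1) sub Pq).
by rewrite /pmul2 /= (pmulA HS (gps_deltaP HS c) (XA _ Xh) gq) mulrA.
Qed.

Lemma MA : forall m X, X `<=` gps -> forall q, set_pow pmul2 (PP X) m.+1 q ->
  forall g, gps g -> pmul q.1 g = gps_zero -> forall v, q.2 * g v = 0.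
Proof.
elim => [|m IH] X XA q.
  by move=> /= [Xq [u ->]] g gg H v; apply: (Arm (XA _ Xq) gg H).
move=> /= [[f c] [q' [[/= Xf [u0 ->]] [Pq' ->]]]] g gg /= H v.
have gq := setpow_gps XA (MA_fst Pq'); have gf := XA _ Xf.
rewrite (pmulA HS gf gq gg) in H.
have A := Arm gf (gps_mulP HS gq gg) H.
have H2 : pmul (pmul (dl (f u0)) q'.1) g = gps_zero.
  rewrite (pmulA HS (gps_deltaP HS (f u0)) gq gg) (mul_deltal HS).
  by apply: funext => w; rewrite A.
have XA' : X `|` [set pmul (dl (f u0)) h | h in X] `<=` gps.
  move=> h [/XA //|[h' Xh' <-]]; exact: (gps_mulP HS (gps_deltaP HS _) (XA _ Xh')).
have := IH _ XA' _ (MA_shift (f u0) XA Pq') g gg H2 v.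
by [].
Qed.

Lemma to_A X m e : X `<=` gps -> idempotent_in [set: R] *%R e ->
  RA (set_pow *%R (coefs X) m.+1) = principal_right [set: R] *%R e ->
  idempotent_in gps pmul (dl e) /\ AA (set_pow pmul X m.+1) = principal_right gps pmul (dl e).
Proof.
move=> XA [_ ee] HR; split; first by split; [apply: (gps_deltaP HS e)|rewrite (delta_mul HS) ee].
apply/seteqP; split => g.
- move=> [gg Hg].
  have kill : forall v, RA (set_pow *%R (coefs X) m.+1) (g v).
    move=> v; split => // z Pz; have [F PF] := MA_snd Pz.
    exact: (MA XA PF gg (Hg _ (MA_fst PF)) v).
  exists g; split => //; rewrite (mul_deltal HS); apply: funext => v.
  have := kill v; rewrite HR => -[r [_ ->]]; by rewrite mulrA ee.
- move=> [a [ga ->]]; split; first exact: (gps_mulP HS (gps_deltaP HS e) ga).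
  move=> F PF; apply: (Qkill XA PF) => v z Pz.
  have : RA (set_pow *%R (coefs X) m.+1) (pmul (dl e) a v).
    by rewrite HR (mul_deltal HS); exists (a v).
  by move=> [_ H]; apply: H.
Qed.

End Ring.

Section Main.
Variables (R : pzRingType) (S : choiceType) (mul : S -> S -> S) (one : S) (le : S -> S -> Prop).
Hypothesis HS : strictly_ordered_monoid mul one le.
Hypothesis Arm : S_Armendariz mul le R.

Local Notation gps := (@gps S le R).
Local Notation pmul := (@gps_mul S mul R).
Local Notation dl := (@delta R S one).
Local Notation RA Y := (r_ann [set: R] *%R 0 Y).
Local Notation AA Z := (r_ann gps pmul gps_zero Z).

Lemma powd1 (X : set R) (J : set (S -> R)) : (forall c, X c -> J (dl c)) ->
  forall m z, set_pow *%R X m.+1 z -> set_pow pmul J m.+1 (dl z).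
Proof.
move=> XJ; elim => [|m IH] z /=; first exact: XJ.
move=> [c [z' [Xc [Pz ->]]]]; exists (dl c), (dl z'); split; first exact: XJ.
by split; [apply: IH|rewrite (delta_mul HS)].
Qed.

Lemma powd2 (X : set R) : forall m F, set_pow pmul [set dl c | c in X] m.+1 F ->
  exists z, set_pow *%R X m.+1 z /\ F = dl z.
Proof.
elim => [|m IH] F /=; first by move=> [c Xc <-]; exists c.
move=> [_ [z' [[c Xc <-] [Pz ->]]]]; have [z [Pz0 ->]] := IH _ Pz.
by exists (c * z); split; [exists c, z|rewrite (delta_mul HS)].
Qed.

Lemma dir1 : gps_gen_right_Baer mul le R -> gen_right_Baer R.
Proof.
move=> HA X _ [x0 X0].
pose Xh := [set dl c | c in X].
have XhA : Xh `<=` gps by move=> _ [c _ <-]; exact: (gps_deltaP HS c).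
have [n [E [n0 [idE HE]]]] := HA Xh XhA (ex_intro _ (dl x0) (ex_intro2 _ _ x0 X0 erefl)).
case: n n0 HE => [//|m] _ HE.
suff ch : forall g, gps g -> (AA (set_pow pmul Xh m.+1) g <-> forall v, RA (set_pow *%R X m.+1) (g v)).
  have [e [ide He]] := from_A HS Arm idE HE ch.
  by exists m.+1, e.
move=> g gg; split.
- move=> [_ Hg] v; split => // z Pz.
  have := Hg _ (powd1 (J := Xh) (fun c Xc => ex_intro2 _ _ c Xc erefl) Pz).
  by rewrite (mul_deltal HS) => /(congr1 (fun f => f v)).
- move=> Hg; split => // F PF; have [z [Pz ->]] := powd2 PF.
  rewrite (mul_deltal HS); apply: funext => v; have [_ H] := Hg v; exact: H.
Qed.

Lemma dir2 : gen_right_Baer R -> gps_gen_right_Baer mul le R.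
Proof.
move=> HR X XA [f0 Xf0].
have [n [e [n0 [ide He]]]] := HR (coefs X) (@subsetT _ _)
  (ex_intro _ (f0 one) (ex_intro _ f0 (ex_intro _ one (conj Xf0 erefl)))).
case: n n0 He => [//|m] _ He.
have [idd HA] := to_A HS Arm XA ide He.
by exists m.+1, (dl e).
Qed.

Lemma ideal_sum (I : set R) (P : set (S * S)) (F : S * S -> R) :
  right_ideal [set: R] +%R *%R (fun x => - x) 0 I -> (forall p, P p -> I (F p)) ->
  I (\sum_(p \in P) F p).
Proof.
move=> [_ I0 Iadd _ _] H; case: finite_supportP; first by rewrite big_nil.
move=> X XP _ _; rewrite big_seq; apply: big_ind => //.
by move=> p /XP /H.
Qed.

Lemma dir3 : gps_gen_right_quasi_Baer mul le R -> gen_right_quasi_Baer R.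
Proof.
move=> HA I HI; have [_ I0 Iadd Iopp Imul] := HI.
pose J := [set f : S -> R | gps f /\ forall s, I (f s)].
have JI : right_ideal gps gps_add pmul gps_opp gps_zero J.
  split.
  - by move=> f [].
  - by split; [exact: (gps_zeroP R HS)|].
  - move=> f g [gf If] [gg Ig]; split; first exact: (gps_addP HS gf gg).
    by move=> s; apply: Iadd.
  - move=> f [gf If]; split; first exact: (gps_oppP HS gf).
    by move=> s; apply: Iopp.
  - move=> f a [gf If] ga; split; first exact: (gps_mulP HS gf ga).
    by move=> s; apply: ideal_sum => // p _; apply: Imul.
have [n [E [n0 [idE HE]]]] := HA J JI.
case: n n0 HE => [//|m] _ HE.
have dJ : forall c, I c -> J (dl c).
  move=> c Ic; split; first exact: (gps_deltaP HS c).
  by move=> s; rewrite /delta; case: (s == one).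
suff ch : forall g, gps g -> (AA (set_pow pmul J m.+1) g <-> forall v, RA (set_pow *%R I m.+1) (g v)).
  have [e [ide He]] := from_A HS Arm idE HE ch.
  by exists m.+1, e.
move=> g gg; split.
- move=> [_ Hg] v; split => // z Pz.
  have := Hg _ (powd1 dJ Pz).
  by rewrite (mul_deltal HS) => /(congr1 (fun f => f v)).
- move=> Hg; split => // F PF.
  apply: (Qkill HS (X := J)) PF _ => //; first by move=> f [].
  move=> v z Pz; have [_ H] := Hg v; apply: H.
  by apply: set_pow_mono Pz => _ [f [u [[_ If] ->]]].
Qed.

Definition sums (C : set R) := [set x | exists s : seq R, (forall c, c \in s -> C c) /\ x = \sum_(c <- s) c].

Lemma Wlem (C : set R) : forall m x, set_pow *%R (sums C) m.+1 x ->
  forall u y, (forall z, set_pow *%R C m.+1 z -> u * z * y = 0) -> u * x * y = 0.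
Proof.
elim => [|m IH] x /=.
  move=> [s [sC ->]] u y H; rewrite mulr_sumr mulr_suml big1_seq // => c /andP[_ cs].
  by apply: H; apply: sC.
move=> [x1 [x2 [[s [sC ->]] [P2 ->]]]] u y H.
rewrite mulr_suml mulr_sumr mulr_suml big1_seq // => c /andP[_ cs].
rewrite mulrA; apply: (IH _ P2) => z Pz.
have := H (c * z); rewrite !mulrA; apply.
by exists c, z; split => //; apply: sC.
Qed.

Lemma dir4 : gen_right_quasi_Baer R -> gps_gen_right_quasi_Baer mul le R.
Proof.
move=> HR J JI; have [JA J0 Jadd Jopp Jmul] := JI.
pose C := coefs J.
have IC : right_ideal [set: R] +%R *%R (fun x => - x) 0 (sums C).
  split => //.
  - by exists [::]; rewrite big_nil.
  - move=> x y [s [sC ->]] [t [tC ->]]; exists (s ++ t); split; last by rewrite big_cat.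
    by move=> c; rewrite mem_cat => /orP[/sC|/tC].
  - move=> x [s [sC ->]]; exists (map -%R s); split; last by rewrite big_map sumrN.
    move=> c /mapP[c' /sC [f [u [Jf ->]]] ->]; exists (gps_opp f), u; split => //.
    exact: Jopp.
  - move=> x a [s [sC ->]] _; exists (map (fun c => c * a) s); split; last by rewrite big_map mulr_suml.
    move=> c /mapP[c' /sC [f [u [Jf ->]]] ->]; exists (pmul f (dl a)), u; split.
      by apply: Jmul => //; exact: (gps_deltaP HS a).
    by rewrite (mul_deltar HS).
have [n [e [n0 [ide He]]]] := HR _ IC.
case: n n0 He => [//|m] _ He.
have He' : RA (set_pow *%R C m.+1) = principal_right [set: R] *%R e.
  rewrite -He; apply/seteqP; split => y [_ Hy]; split => // x Px.
  - by have := Wlem Px (u := 1) (y := y); rewrite !mul1r; apply => z Pz; rewrite mul1r; apply: Hy.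
  - apply: Hy; apply: set_pow_mono Px => c Cc; exists [:: c]; split; last by rewrite big_seq1.
    by move=> c'; rewrite inE => /eqP ->.
have [idd HA] := to_A HS Arm JA ide He'.
by exists m.+1, (dl e).
Qed.

End Main.

Local Close Scope ring_scope.

Theorem corollary3p8 (R : pzRingType) (S : choiceType)
  (mul : S -> S -> S) (one : S) (le : S -> S -> Prop) :
  strictly_ordered_monoid mul one le ->
  quasitotally_ordered mul one le ->
  S_Armendariz mul le R ->
  (gps_gen_right_Baer mul le R <-> gen_right_Baer R) /\
  (gps_gen_right_quasi_Baer mul le R <-> gen_right_quasi_Baer R).
Proof.
move=> HS _ Arm; split; split.
- exact: dir1 HS Arm.
- exact: dir2 HS Arm.
- exact: dir3 HS Arm.
- exact: dir4 HS Arm.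
Qed.
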